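(* Let $F$ be a fully-connected ReLU network with node maps $F_{ij}$ and canonical polyhedral complex $\mathcal{C}(F)$. For every cell $C$ of $\mathcal{C}(F)$ and every node map $F_{ij}$, the sign of $F_{ij}$ is constant on the interior $C^\circ$ of $C$, so the sign sequence $s(C)\in\{-1,0,1\}^N$, $s_{ij}(C)=\mathrm{sgn}(F_{ij}(x))$ for $x\in C^\circ$, is well-defined; moreover the map $s$ from the set of cells of $\mathcal{C}(F)$ to $\{-1,0,1\}^N$ is injective.
   Context: Polyhedra are intersections of finitely many closed half-spaces of some $\mathbb{R}^n$ (possibly unbounded); $C^\circ$ denotes the interior of a polyhedron $C$ relative to its affine span (a point is its own interior). A polyhedral complex is a finite set of polyhedra closed under taking faces such that any two members intersect in a common face. A ReLU network of architecture $(n_0,\dots,n_m,1)$ is given by affine maps $A_i:\mathbb{R}^{n_{i-1}}\to\mathbb{R}^{n_i}$, $1\le i\le m+1$, $n_{m+1}=1$; $F_i=\mathrm{ReLU}\circ A_i$ ($i\le m$, ReLU coordinatewise), $G=A_{m+1}$, $F=G\circ F_m\circ\cdots\circ F_1$, $F_{(k)}=F_k\circ\cdots\circ F_1$ ($F_{(0)}=\mathrm{id}$). The node maps are $F_{ij}=\pi_j\circ A_i\circ F_{(i-1)}:\mathbb{R}^{n_0}\to\mathbb{R}$ for $1\le i\le m+1$, $1\le j\le n_i$; $N=n_1+\cdots+n_m+1$ is their number. $R^{(i)}$ is the polyhedral complex on $\mathbb{R}^{n_{i-1}}$ induced by the hyperplanes $\{x:\pi_jA_i(x)=0\}$, $1\le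 j\le n_i$: its cells are the nonempty intersections obtained by choosing for each $j$ one of $\{\pi_jA_i\ge0\},\{\pi_jA_i\le0\},\{\pi_jA_i=0\}$. The canonical polyhedral complex: $\mathcal{C}(F_{(1)})=R^{(1)}$, $\mathcal{C}(F_{(k)})=\{C\cap F_{(k-1)}^{-1}(R)\ne\emptyset: C\in\mathcal{C}(F_{(k-1)}), R\in R^{(k)}\}$ for $2\le k\le m+1$ (using the arrangement of $G$ at step $m+1$), and $\mathcal{C}(F)$ is the last one; it is a polyhedral complex on $\mathbb{R}^{n_0}$. *)

(* Defs.v *)
From HB Require Import structures.
From mathcomp Require Import all_boot all_order all_algebra.
From mathcomp Require Import boolp classical_sets reals.
Set Implicit Arguments. Unset Strict Implicit. Unset Printing Implicit Defensive.
Import Order.TTheory GRing.Theory Num.Theory.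
Local Open Scope ring_scope.
Local Open Scope classical_set_scope.

(* A ReLU network of architecture (n 0, ..., n m, n m.+1 = 1).
   Layer k.+1 (k = 0..m) is the affine map A_{k+1} x = x *m W k + b k
   from 'rV_(n k) to 'rV_(n k.+1) (row-vector convention).
   Weights for k > m are irrelevant. *)
Record relu_net (R : realType) := ReluNet {
  depth : nat;
  width : nat -> nat;
  width_out : width depth.+1 = 1%N;
  weight : forall k : nat, 'M[R]_(width k, width k.+1);
  bias : forall k : nat, 'rV[R]_(width k.+1)
}.

Section Net.
Variable R : realType.
Variable F : relu_net R.

Definition relu_vec (q : nat) (v : 'rV[R]_q) : 'rV[R]_q :=
  \row_j Num.max (v 0 j) 0.

Definition affine_layer (k : nat) (y : 'rV[R]_(width F k)) : 'rV[R]_(width F k.+1) :=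
  y *m weight F k + bias F k.
Arguments affine_layer k y : clear implicits.

Fixpoint partial_net (k : nat) : 'rV[R]_(width F 0) -> 'rV[R]_(width F k) :=
  match k with
  | 0 => fun x => x
  | k'.+1 => fun x => relu_vec (affine_layer k' (partial_net k' x))
  end.

(* Node map F_{(k+1) j} = pi_j o A_{k+1} o F_(k), for 0 <= k <= m. *)
Definition node_map (k : nat) (j : 'I_(width F k.+1)) (x : 'rV[R]_(width F 0)) : R :=
  affine_layer k (partial_net k x) 0 j.
Arguments node_map k j x : clear implicits.

Inductive side := Side_ge | Side_le | Side_eq.

Definition side_holds (s : side) (a : R) : Prop :=
  match s with
  | Side_ge => 0 <= a
  | Side_le => a <= 0
  | Side_eq => a = 0
  end.

Definition arrangement_cells (k : nat) : set (set 'rV[R]_(width F k)) :=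
  [set S | S !=set0 /\
     exists sigma : 'I_(width F k.+1) -> side,
       S = [set y | forall j, side_holds (sigma j) (affine_layer k y 0 j)]].

Arguments arrangement_cells k : clear implicits.

(* C(F_(k)); we start from C(F_(0)) = {R^{n_0}}, which gives
   C(F_(1)) = R^{(1)} as in the paper. *)
Fixpoint canonical_complex (k : nat) : set (set 'rV[R]_(width F 0)) :=
  match k with
  | 0 => [set setT]
  | k'.+1 => [set S | exists C Rc,
        canonical_complex k' C /\ arrangement_cells k' Rc /\
        S = C `&` (partial_net k' @^-1` Rc) /\ S !=set0]
  end.

Definition cells : set (set 'rV[R]_(width F 0)) := canonical_complex (depth F).+1.

End Net.
Arguments partial_net {R} F k x.
Arguments node_map {R} F k j x.
Arguments arrangement_cells {R} F k _.
Arguments canonical_complex {R} F k _.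
Arguments cells {R} F _.

Definition affine_span (R : realType) (p : nat) (S : set 'rV[R]_p) : set 'rV[R]_p :=
  [set y | exists (l : nat) (c : 'I_l -> 'rV[R]_p) (lam : 'I_l -> R),
     (forall i, S (c i)) /\ \sum_(i < l) lam i = 1 /\ y = \sum_(i < l) lam i *: c i].

Definition rel_interior (R : realType) (p : nat) (S : set 'rV[R]_p) : set 'rV[R]_p :=
  [set x | S x /\ exists e : R, 0 < e /\
     forall y, affine_span S y -> (forall j, `|y 0 j - x 0 j| < e) -> S y].

(* Main.v *)
Require Import Defs.
From HB Require Import structures.
From mathcomp Require Import all_boot all_order all_algebra.
From mathcomp Require Import boolp classical_sets reals.
From mathcomp Require Import ring lra.
Import Order.TTheory GRing.Theory Num.Theory.
Local Open Scope ring_scope.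
Local Open Scope classical_set_scope.
Set Implicit Arguments. Unset Strict Implicit. Unset Printing Implicit Defensive.
Definition polyP (R : realType) (F : relu_net R) (sg : nat -> nat -> side) (k : nat)
  : set 'rV[R]_(width F 0) :=
  [set y | forall k', (k' < k)%N -> forall j : 'I_(width F k'.+1),
      side_holds (sg k' j) (node_map F k' j y)].
Arguments polyP {R} F sg k.

Lemma polyP_mono (R : realType) (F : relu_net R) sg k1 k2 y :
  (k1 <= k2)%N -> polyP F sg k2 y -> polyP F sg k1 y.
Proof. move=> le12 h k' hk j; apply: h; exact: leq_trans hk le12. Qed.

Lemma cc_repr (R : realType) (F : relu_net R) k C :
  canonical_complex F k C -> exists sg, C = polyP F sg k.
Proof.
elim: k C => [|k IH] C /=.
  move=> ->; exists (fun _ _ => Side_ge); rewrite eqEsubset; split => y //= _ k' //.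
move=> [C' [Rc [hC' [[_ [tau ->]] [-> _]]]]].
have [sg ->] := IH _ hC'.
pose tau' (n : nat) : side := odflt Side_ge (omap tau (insub n)).
exists (fun k' n => if k' == k then tau' n else sg k' n).
rewrite eqEsubset; split => y /=.
  move=> [h1 h2] k' hk j.
  case: (ltngtP k' k) hk => [lt _|gt|eqk _].
    exact: h1.
    by rewrite ltnS leqNgt gt.
  subst k'; rewrite /tau' valK /=; exact: h2.
move=> h; split.
  move=> k' hk j; have := h k' (ltnW hk) j; by rewrite (ltn_eqF hk).
move=> j; have := h k (ltnSn k) j; by rewrite eqxx /tau' valK.
Qed.

Lemma relu_comb (R : realType) l (lam u : 'I_l -> R) s :
  \sum_i lam i = 1 -> (forall i, side_holds s (u i)) ->
  side_holds s (\sum_i lam i * u i) ->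
  Num.max (\sum_i lam i * u i) 0 = \sum_i lam i * Num.max (u i) 0.
Proof.
move=> h1; case: s => /= hu hs.
- rewrite max_l //; apply: eq_bigr => i _; by rewrite max_l.
- rewrite max_r //; rewrite big1 // => i _; by rewrite max_r ?mulr0.
- rewrite max_r ?hs //; rewrite big1 // => i _; by rewrite hu max_r ?mulr0.
Qed.

Lemma aff_comb (R : realType) (F : relu_net R) k l (lam : 'I_l -> R)
  (v : 'I_l -> 'rV[R]_(width F k)) :
  \sum_i lam i = 1 ->
  affine_layer (\sum_i lam i *: v i) = \sum_i lam i *: affine_layer (v i).
Proof.
move=> h1; rewrite /affine_layer mulmx_suml.
under [in RHS]eq_bigr => i _ do rewrite scalerDr scalemxAl.
by rewrite big_split /= -scaler_suml h1 scale1r.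
Qed.

Lemma net_comb (R : realType) (F : relu_net R) sg k l (lam : 'I_l -> R)
  (c : 'I_l -> 'rV[R]_(width F 0)) z :
  \sum_i lam i = 1 -> (forall i, polyP F sg k (c i)) -> polyP F sg k z ->
  z = \sum_i lam i *: c i ->
  partial_net F k z = \sum_i lam i *: partial_net F k (c i).
Proof.
move=> h1; elim: k => [|k IH] hc hz ez /=; first by [].
have e1 : partial_net F k z = \sum_i lam i *: partial_net F k (c i).
  apply: IH => //; [by move=> i; apply: polyP_mono (hc i)| by apply: polyP_mono hz].
rewrite e1 aff_comb //; apply/rowP => j; rewrite !mxE summxE.
rewrite (eq_bigr (fun i => lam i * affine_layer (partial_net F k (c i)) 0 j)); last first.
  by move=> i _; rewrite !mxE.
rewrite (@relu_comb _ _ _ _ (sg k j)) //.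
- by rewrite summxE; apply: eq_bigr => i _; rewrite !mxE.
- by move=> i; exact: (hc i k (ltnSn k) j).
have := hz k (ltnSn k) j; rewrite /node_map e1 aff_comb // summxE.
by under eq_bigr => i _ do rewrite mxE.
Qed.

Lemma node_comb (R : realType) (F : relu_net R) sg k j l (lam : 'I_l -> R)
  (c : 'I_l -> 'rV[R]_(width F 0)) z :
  \sum_i lam i = 1 -> (forall i, polyP F sg k (c i)) -> polyP F sg k z ->
  z = \sum_i lam i *: c i ->
  node_map F k j z = \sum_i lam i * node_map F k j (c i).
Proof.
move=> h1 hc hz ez; rewrite /node_map (net_comb h1 hc hz ez) aff_comb // summxE.
by apply: eq_bigr => i _; rewrite mxE.
Qed.

Definition two (T : Type) (a b : T) : 'I_2 -> T := fun i => if val i == 0%N then a else b.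

Lemma sum2 (V : nmodType) (f : 'I_2 -> V) : \sum_i f i = f ord0 + f (lift ord0 ord0).
Proof. by rewrite !big_ord_recl big_ord0 addr0. Qed.

Lemma node_comb2 (R : realType) (F : relu_net R) sg k j (a b : R) x y :
  a + b = 1 -> polyP F sg k x -> polyP F sg k y -> polyP F sg k (a *: x + b *: y) ->
  node_map F k j (a *: x + b *: y) = a * node_map F k j x + b * node_map F k j y.
Proof.
move=> h1 hx hy hz.
have := @node_comb R F sg k j 2 (two a b) (two x y) (a *: x + b *: y).
rewrite !sum2 /=; apply => //.
by move=> i; rewrite /two; case: ifP.
Qed.

Lemma side_conv (R : realType) s (a b u v : R) :
  0 <= a -> 0 <= b -> side_holds s u -> side_holds s v -> side_holds s (a * u + b * v).
Proof. case: s => /= ha hb hu hv; [nra|nra|by rewrite hu hv !mulr0 addr0]. Qed.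

Lemma polyP_conv (R : realType) (F : relu_net R) sg k (a b : R) x y :
  0 <= a -> 0 <= b -> a + b = 1 -> polyP F sg k x -> polyP F sg k y ->
  polyP F sg k (a *: x + b *: y).
Proof.
move=> ha hb h1; elim: k => [|k IH] hx hy; first by move=> k'.
have hz : polyP F sg k (a *: x + b *: y).
  by apply: IH; [exact: (polyP_mono (leqnSn k) hx)|exact: (polyP_mono (leqnSn k) hy)].
move=> k'; rewrite ltnS leq_eqVlt => /orP[/eqP ->|lt] j; last by apply: hz.
rewrite (@node_comb2 _ _ sg) //; [|exact: (polyP_mono (leqnSn k) hx)|exact: (polyP_mono (leqnSn k) hy)].
by apply: side_conv => //; [apply: hx|apply: hy].
Qed.

Lemma half_ne0 (R : realType) (a b : R) : a != 0 ->
  (0 <= a /\ 0 <= b) \/ (a <= 0 /\ b <= 0) -> 2^-1 * a + 2^-1 * b != 0.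
Proof.
move=> ha [[h1 h2]|[h1 h2]].
  have hp : 0 < a by rewrite lt_def ha h1.
  by rewrite gt_eqF //; lra.
have hp : a < 0 by rewrite lt_def eq_sym ha h1.
by rewrite lt_eqF //; lra.
Qed.

Lemma witness (R : realType) (V : lmodType R) (T : finType) (C : set V)
  (g : T -> V -> R) x0 :
  C x0 ->
  (forall x y, C x -> C y -> C (2^-1 *: x + 2^-1 *: y) /\
     forall i, g i (2^-1 *: x + 2^-1 *: y) = 2^-1 * g i x + 2^-1 * g i y) ->
  (forall i, (forall x, C x -> 0 <= g i x) \/ (forall x, C x -> g i x <= 0)) ->
  exists x, C x /\ forall i, (exists y, C y /\ g i y != 0) -> g i x != 0.
Proof.
move=> hx0 hmid hsg.
suff: forall s : seq T, exists x, C x /\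
    forall i, i \in s -> (exists y, C y /\ g i y != 0) -> g i x != 0.
  move=> /(_ (enum T)) [x [hx H]]; exists x; split => // i; apply: H.
  by rewrite mem_enum.
elim=> [|i s [x [hx H]]]; first by exists x0.
case: (pselect (exists y, C y /\ g i y != 0)) => [[y [hy giy]]|nex]; last first.
  exists x; split => // i'; rewrite inE => /orP[/eqP -> //|]; exact: H.
case: (boolP (g i x == 0)) => gix; last first.
  exists x; split => // i'; rewrite inE => /orP[/eqP -> //|]; exact: H.
have [hz gz] := hmid x y hx hy.
exists (2^-1 *: x + 2^-1 *: y); split => // i'; rewrite gz.
have ss : forall i'', (0 <= g i'' x /\ 0 <= g i'' y) \/ (g i'' x <= 0 /\ g i'' y <= 0).
  by move=> i''; case: (hsg i'') => h; [left|right]; split; apply: h.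
rewrite inE => /orP[/eqP ->|ins] ex.
  rewrite addrC; apply: half_ne0 => //.
  by case: (ss i) => -[h1 h2]; [left|right].
apply: half_ne0; first exact: H.
exact: ss.
Qed.

Lemma fin_eps (R : realType) (T : finType) (Q : T -> R -> Prop) :
  (forall p e e', Q p e -> 0 < e' -> e' <= e -> Q p e') ->
  (forall p, exists e, 0 < e /\ Q p e) -> exists e, 0 < e /\ forall p, Q p e.
Proof.
move=> hmono hex.
suff: forall s : seq T, exists e, 0 < e /\ forall p, p \in s -> Q p e.
  move=> /(_ (enum T)) [e [he H]]; exists e; split => // p; apply: H.
  by rewrite mem_enum.
elim=> [|p s [e [he H]]]; first by exists 1.
have [e' [he' Hp]] := hex p.
exists (Num.min e e'); split; first by rewrite lt_min he he'.
move=> q; rewrite inE => /orP[/eqP ->|qs].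
  by apply: (hmono _ e') => //; [rewrite lt_min he he'| rewrite ge_min lexx orbT].
by apply: (hmono _ e); [apply: H|rewrite lt_min he he'| rewrite ge_min lexx].
Qed.

Lemma max0_lip (R : realType) (a b : R) : `|Num.max a 0 - Num.max b 0| <= `|a - b|.
Proof.
rewrite ler_norml; case: (lerP 0 (a - b)) => hab;
  [rewrite (ger0_norm hab) | rewrite (ltr0_norm hab)];
  case: (lerP 0 a) => ha; case: (lerP 0 b) => hb;
  apply/andP; split; lra.
Qed.

Definition wsum (R : realType) (F : relu_net R) k :=
  \sum_i \sum_j `|weight F k i j|.

Lemma aff_lip (R : realType) (F : relu_net R) k (L d : R) (u v : 'rV[R]_(width F k)) :
  0 <= L * d -> (forall i, `|v 0 i - u 0 i| <= L * d) ->
  forall j, `|affine_layer v 0 j - affine_layer u 0 j| <= (L * wsum F k) * d.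
Proof.
move=> hLd hi j.
have -> : affine_layer v 0 j - affine_layer u 0 j =
    \sum_i (v 0 i - u 0 i) * weight F k i j.
  rewrite /affine_layer !mxE opprD addrACA subrr addr0 -sumrB.
  by apply: eq_bigr => i _; rewrite mulrBl.
apply: le_trans (ler_norm_sum _ _ _) _.
apply: (@le_trans _ _ (\sum_i (L * d) * (\sum_j' `|weight F k i j'|))).
  apply: ler_sum => i _; rewrite normrM; apply: ler_pM => //.
  by rewrite (bigD1 j) //= lerDl sumr_ge0.
by rewrite -mulr_sumr /wsum mulrAC.
Qed.

Lemma wsum_ge0 (R : realType) (F : relu_net R) k : 0 <= wsum F k.
Proof. by apply: sumr_ge0 => i _; apply: sumr_ge0. Qed.

Lemma pnS (R : realType) (F : relu_net R) k x j :
  partial_net F k.+1 x 0 j = Num.max (affine_layer (partial_net F k x) 0 j) 0.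
Proof. by rewrite /= mxE. Qed.

Lemma net_lip (R : realType) (F : relu_net R) k : exists L : R, 0 <= L /\
  forall x y : 'rV[R]_(width F 0), forall d : R, 0 <= d -> (forall i, `|y 0 i - x 0 i| <= d) ->
  forall j, `|partial_net F k y 0 j - partial_net F k x 0 j| <= L * d.
Proof.
elim: k => [|k [L [hL IH]]].
  by exists 1; split => // x y d hd h j; rewrite mul1r; apply: h.
exists (L * wsum F k); split; first by rewrite mulr_ge0 // wsum_ge0.
move=> x y d hd h j; rewrite !pnS.
apply: le_trans (max0_lip _ _) _.
apply: aff_lip; first by rewrite mulr_ge0.
exact: IH.
Qed.

Lemma node_lip (R : realType) (F : relu_net R) k : exists L : R, 0 <= L /\
  forall x y : 'rV[R]_(width F 0), forall d : R, 0 <= d -> (forall i, `|y 0 i - x 0 i| <= d) ->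
  forall j, `|node_map F k j y - node_map F k j x| <= L * d.
Proof.
have [L [hL IH]] := net_lip F k.
exists (L * wsum F k); split; first by rewrite mulr_ge0 // wsum_ge0.
move=> x y d hd h j; rewrite /node_map.
apply: aff_lip; first by rewrite mulr_ge0.
exact: IH.
Qed.

Lemma side0 (R : realType) s : side_holds s (0 : R).
Proof. by case: s => /=. Qed.

Lemma side_pos (R : realType) s (a b : R) : side_holds s a -> 0 < a * b -> side_holds s b.
Proof. case: s => /= ha hab; [nra|nra|by move: hab; rewrite ha mul0r ltxx]. Qed.

Lemma relint_zero (R : realType) (F : relu_net R) sg n k (j : 'I_(width F k.+1)) x :
  (k < n)%N -> rel_interior (polyP F sg n) x -> node_map F k j x = 0 ->
  forall w, polyP F sg n w -> node_map F k j w = 0.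
Proof.
move=> hk [hx [e [he H]]] fx0 w hw.
pose M : R := 1 + \sum_i `|x 0 i - w 0 i|.
have hM : 0 < M by rewrite /M ltr_pwDl // sumr_ge0.
pose t : R := e / (2 * M).
have ht : 0 < t by rewrite /t divr_gt0 // mulr_gt0.
pose z := (1 + t) *: x + (- t) *: w.
have hz : polyP F sg n z.
  apply: H.
    exists 2, (two x w), (two (1 + t) (-t)); split; first by case=> -[|[|]].
    by rewrite !sum2 /two /=; split; [ring|by []].
  move=> i; rewrite !mxE.
  have -> : (1 + t) * x 0 i + - t * w 0 i - x 0 i = t * (x 0 i - w 0 i) by ring.
  rewrite normrM (gtr0_norm ht).
  have hi : `|x 0 i - w 0 i| <= M - 1.
    have -> : M - 1 = \sum_i `|x 0 i - w 0 i| by rewrite /M; ring.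
    by rewrite (bigD1 i) //= lerDl sumr_ge0.
  have : t * `|x 0 i - w 0 i| <= t * (M - 1) by rewrite ler_wpM2l // ltW.
  have : t * M = e / 2 by rewrite /t; field; rewrite gt_eqF.
  by move=> h1 h2; lra.
have hfz := @node_comb2 R F sg k j (1 + t) (- t) x w.
rewrite fx0 mulr0 add0r in hfz.
have := hz k hk j; have := hw k hk j; rewrite /z hfz; last first.
- by apply: polyP_mono hz; exact: ltnW.
- by apply: polyP_mono hw; exact: ltnW.
- by apply: polyP_mono hx; exact: ltnW.
- ring.
case: (sg k j) => /= h1 h2; apply/eqP; rewrite eq_le; apply/andP; split; nra.
Qed.

Lemma cells_repr (R : realType) (F : relu_net R) C : cells F C ->
  C !=set0 /\ exists sg, C = polyP F sg (depth F).+1.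
Proof.
move=> hC; split; last exact: cc_repr hC.
by move: hC; rewrite /cells /= => -[C' [Rc [_ [_ [_ ?]]]]].
Qed.

Lemma relint_ne (R : realType) (F : relu_net R) sg :
  polyP F sg (depth F).+1 !=set0 -> rel_interior (polyP F sg (depth F).+1) !=set0.
Proof.
set D := depth F; set C := polyP F sg D.+1 => -[x0 hx0].
pose T := {k : 'I_D.+1 & 'I_(width F k.+1)}.
pose g (p : T) := node_map F (tag p) (tagged p).
have hCk : forall (p : T) y, C y -> polyP F sg (tag p) y.
  by move=> p y hy; apply: polyP_mono hy; exact: ltnW.
have [x [hx hxg]] : exists x, C x /\
    forall p : T, (exists y, C y /\ g p y != 0) -> g p x != 0.
  apply: (@witness R _ T C g x0 hx0).
  - move=> x y hx hy.
    have hm : C (2^-1 *: x + 2^-1 *: y) by apply: polyP_conv => //; lra.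
    split=> // p; rewrite /g (@node_comb2 _ _ sg) //; try by apply: hCk.
    lra.
  - move=> p; have hs := fun y (hy : C y) => hy (tag p) (ltn_ord _) (tagged p).
    rewrite /g; move: hs; case: (sg (tag p) (tagged p)) => /= hs.
    + by left => y hy; apply: hs.
    + by right => y hy; apply: hs.
    + by left => y hy; rewrite hs.
pose Q (p : T) (e : R) := forall y : 'rV[R]_(width F 0),
  (forall i, `|y 0 i - x 0 i| < e) -> g p x != 0 -> 0 < g p x * g p y.
have [e [he hQ]] : exists e, 0 < e /\ forall p, Q p e.
  apply: fin_eps.
    move=> p e e' hQ he' le y hy; apply: hQ => i; exact: lt_le_trans (hy i) le.
  move=> p; case: (boolP (g p x == 0)) => gx0.
    by exists 1; split => // y _; rewrite gx0.
  have [L [hL HL]] := node_lip F (tag p).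
  pose e := `|g p x| / (2 * (L + 1)).
  have hL1 : 0 < L + 1 by lra.
  have hgx : 0 < `|g p x| by rewrite normr_gt0.
  have he : 0 < e by rewrite /e divr_gt0 // mulr_gt0.
  exists e; split => // y hy _.
  have := HL x y e (ltW he) (fun i => ltW (hy i)) (tagged p).
  have : (L + 1) * e = `|g p x| / 2 by rewrite /e; field; rewrite gt_eqF.
  rewrite -/(g p y) -/(g p x).
  move: gx0 hgx; set a := g p x; set b := g p y => gx0 hgx h1.
  rewrite ler_norml => /andP[h2 h3].
  have hLe : L * e <= `|a| / 2 by rewrite -h1; nra.
  case: (ltgtP 0 a) gx0 hgx => [ha|ha|<-]; last by [].
    rewrite (gtr0_norm ha) in hLe *; move=> _ _; nra.
  rewrite (ltr0_norm ha) in hLe *; move=> _ _; nra.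
exists x; split => //; exists e; split => // y [l [c [lam [hc [hs ey]]]]] hy.
suff : forall k, (k <= D.+1)%N -> polyP F sg k y by apply.
elim=> [|k IH] hk; first by [].
have hyk := IH (ltnW hk).
move=> k'; rewrite ltnS leq_eqVlt => /orP[/eqP ->|lt] j; last by apply: hyk.
pose p : T := existT (fun k0 : 'I_D.+1 => 'I_(width F k0.+1)) (Ordinal hk) j.
have hxs := hx k hk j.
case: (boolP (g p x == 0)) => gx0.
  have hz : forall w, C w -> node_map F k j w = 0.
    move=> w hw; apply/eqP; apply: contraLR gx0 => hne; apply: hxg.
    by exists w.
  rewrite (@node_comb R F sg k j l lam c y hs _ hyk ey).
    by rewrite big1; [exact: side0|move=> i _; rewrite hz ?mulr0].
    
  by move=> i; apply: polyP_mono (hc i); exact: ltnW.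
apply: (side_pos hxs); exact: hQ p y hy gx0.
Qed.

Lemma sg_side (R : realType) s (a b : R) :
  side_holds s a -> side_holds s b -> a != 0 -> b != 0 -> Num.sg a = Num.sg b.
Proof.
case: s => /= ha hb na nb.
- by rewrite !gtr0_sg // lt_def ?na ?nb.
- by rewrite !ltr0_sg // lt_def eq_sym ?na ?nb.
- by move: na; rewrite ha eqxx.
Qed.

Lemma side_transfer (R : realType) s1 s2 (a b c : R) :
  side_holds s1 a -> side_holds s1 c -> side_holds s2 b -> Num.sg a = Num.sg b ->
  a != 0 -> side_holds s2 c.
Proof.
move=> ha hc hb hsg na.
case: (ltgtP 0 a) => [apos|aneg|a0]; last by move: na; rewrite -a0 eqxx.
  have : 0 < b by rewrite -(sgr_cp0 b).1.1 -hsg gtr0_sg.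
  by case: s1 ha hc => /= ha hc; case: s2 hb => /= hb; lra.
have : b < 0 by rewrite -(sgr_cp0 b).1.2 -hsg ltr0_sg.
by case: s1 ha hc => /= ha hc; case: s2 hb => /= hb; lra.
Qed.

Lemma cell_sub (R : realType) (F : relu_net R) sg1 sg2 x1 x2 :
  rel_interior (polyP F sg1 (depth F).+1) x1 ->
  polyP F sg2 (depth F).+1 x2 ->
  (forall (k : 'I_(depth F).+1) (j : 'I_(width F k.+1)),
        Num.sg (node_map F k j x1) = Num.sg (node_map F k j x2)) ->
  polyP F sg1 (depth F).+1 `<=` polyP F sg2 (depth F).+1.
Proof.
move=> hx1 hx2 hs w hw k hk j.
have := hs (Ordinal hk) j => /= hsj.
case: (boolP (node_map F k j x1 == 0)) => [/eqP|] a0.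
  by rewrite (relint_zero hk hx1 a0 hw); exact: side0.
apply: (side_transfer (hx1.1 k hk j) (hw k hk j) (hx2 k hk j) hsj a0).
Qed.

(* Nodes (i, j), 1 <= i <= m+1, are indexed here by k = i - 1 : 'I_(m+1)
   and j : 'I_(n_{k+1}); s_{ij}(C) = Num.sg (F_{ij} x) for x in C°. *)
Theorem theorem14 (R : realType) (F : relu_net R) :
  (forall C, cells F C ->
     rel_interior C !=set0 /\
     (forall (k : 'I_(depth F).+1) (j : 'I_(width F k.+1)) (x y : 'rV[R]_(width F 0)),
        rel_interior C x -> rel_interior C y ->
        Num.sg (node_map F k j x) = Num.sg (node_map F k j y))) /\
  (forall C1 C2 x1 x2, cells F C1 -> cells F C2 ->
     rel_interior C1 x1 -> rel_interior C2 x2 ->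
     (forall (k : 'I_(depth F).+1) (j : 'I_(width F k.+1)),
        Num.sg (node_map F k j x1) = Num.sg (node_map F k j x2)) ->
     C1 = C2).
Proof.
split.
  move=> C /cells_repr [hne [sg eC]]; subst C; split; first exact: relint_ne.
  move=> k j x y hx hy.
  have hk := ltn_ord k.
  case: (boolP (node_map F k j x == 0)) => [/eqP|] fx.
    by rewrite fx (relint_zero hk hx fx hy.1).
  case: (boolP (node_map F k j y == 0)) => [/eqP|] fy.
    by move: fx; rewrite (relint_zero hk hy fy hx.1) eqxx.
  exact: (sg_side (hx.1 k hk j) (hy.1 k hk j) fx fy).
move=> C1 C2 x1 x2 /cells_repr [_ [sg1 ->]] /cells_repr [_ [sg2 ->]] h1 h2 hs.
rewrite eqEsubset; split.
  exact: (cell_sub h1 h2.1 hs).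
by apply: (cell_sub h2 h1.1) => k j; rewrite hs.
Qed.
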